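(* Assume (F) and (H), and let $\varepsilon>0$. If $c\ge \max_{v\in[0,1]}f(v)-\min_{v\in[0,1]}h'(v)+2\sqrt{\varepsilon\sup_{v\in(0,1]}\frac{f(v)}{v}}$, then the problem $y'=(c+h'(v))\frac{\sqrt{y(2\varepsilon+y)}}{\varepsilon+y}-f(v)$ on $[0,1]$, $y(0)=0$, $y(1)=0$, $y>0$ on $(0,1)$, has a solution, i.e., $c$ is an admissible speed.
   Context: Assumptions. - (F): $f\in C([0,1])$, $f(0)=f(1)=0$, $f(s)>0$ for $s\in(0,1)$, and there is $k>0$ with $f(s)\le ks$ and $f(s)\le k(1-s)$ for all $s\in[0,1]$. - (H): $h\in C^2([0,1])$ with $h(0)=h'(0)=0$. *)

(* Defs.v *)
From Stdlib Require Import Reals.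
From Coquelicot Require Import Coquelicot.
Open Scope R_scope.

Definition I01 (x : R) : Prop := 0 <= x <= 1.

Definition cont_on01_at (g : R -> R) (x : R) : Prop :=
  filterlim g (within I01 (locally x)) (locally (g x)).

Definition cont_on01 (g : R -> R) : Prop := forall x, I01 x -> cont_on01_at g x.

Definition deriv01_at (g : R -> R) (x dgx : R) : Prop :=
  filterlim (fun t => (g t - g x) / (t - x))
    (within (fun t => I01 t /\ t <> x) (locally x)) (locally dgx).

Definition hypF (f : R -> R) : Prop :=
  cont_on01 f /\ f 0 = 0 /\ f 1 = 0 /\
  (forall s, 0 < s < 1 -> f s > 0) /\
  exists k, k > 0 /\ forall s, I01 s -> f s <= k * s /\ f s <= k * (1 - s).

Definition hypH (h h1 h2 : R -> R) : Prop :=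
  (forall x, I01 x -> deriv01_at h x (h1 x)) /\
  (forall x, I01 x -> deriv01_at h1 x (h2 x)) /\
  cont_on01 h2 /\ h 0 = 0 /\ h1 0 = 0.

Definition solves (f h1 : R -> R) (eps c : R) (y : R -> R) : Prop :=
  cont_on01 y /\ y 0 = 0 /\ y 1 = 0 /\
  forall v, 0 < v < 1 ->
    y v > 0 /\
    is_derive y v ((c + h1 v) * sqrt (y v * (2 * eps + y v)) / (eps + y v) - f v).

(* Main.v *)
Require Import Defs.
From Stdlib Require Import Reals Lra Lia ZArith.
From Coquelicot Require Import Coquelicot.
Open Scope R_scope.

Lemma approx_le (x y : R) : (forall th, 0 < th -> x <= y + th) -> x <= y.
Proof.
  intros H. destruct (Rle_or_lt x y) as [h|h]; auto.
  specialize (H ((x - y)/2) ltac:(lra)). lra.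
Qed.

Lemma nat_large (r : R) : exists n : nat, r < INR n.
Proof.
  destruct (nfloor_ex (Rabs r) (Rabs_pos r)) as [n Hn].
  exists (S n). rewrite S_INR. pose proof (Rle_abs r). lra.
Qed.

Lemma abs_mul_le d x e : 0 <= d -> Rabs x <= e -> Rabs (d * x) <= d * e.
Proof.
  intros Hd Hx. rewrite Rabs_mult, (Rabs_pos_eq d Hd).
  apply Rmult_le_compat_l; auto.
Qed.

Fixpoint ex (Phi : R -> R -> R) (h : R) (i : nat) : R :=
  match i with O => 0 | S i' => ex Phi h i' + h * Phi (INR i' * h) (ex Phi h i') end.
Definition sig Phi h i := Phi (INR i * h) (ex Phi h i).
Definition kk (h t : R) : nat := Z.to_nat (floor (t / h)).
Definition poly Phi h t :=
  ex Phi h (kk h t) + (t - INR (kk h t) * h) * sig Phi h (kk h t).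

Lemma kk_spec h t : 0 < h -> 0 <= t ->
  INR (kk h t) * h <= t < (INR (kk h t) + 1) * h.
Proof.
  intros Hh Ht. unfold kk, floor. destruct (floor_ex (t / h)) as [n Hn]. simpl.
  assert (Hq : 0 <= t / h) by (apply Rdiv_le_0_compat; lra).
  assert (Hn0 : (0 <= n)%Z).
  { assert (IZR (-1) < IZR n) by (simpl; lra). apply lt_IZR in H. lia. }
  rewrite INR_IZR_INZ, Z2Nat.id by exact Hn0.
  assert (E : t = t / h * h) by (field; lra).
  split.
  - rewrite E at 1. apply Rmult_le_compat_r; lra.
  - rewrite E at 1. apply Rmult_lt_compat_r; lra.
Qed.

Lemma kk_le h k t : 0 < h -> 0 <= t -> INR k * h <= t -> (k <= kk h t)%nat.
Proof.
  intros Hh Ht H. destruct (kk_spec h t Hh Ht) as [_ H2].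
  assert (INR k < INR (S (kk h t))).
  { rewrite S_INR. apply Rmult_lt_reg_r with h; lra. }
  apply INR_lt in H0. lia.
Qed.

Lemma kk_ge h k t : 0 < h -> 0 <= t -> t < (INR k + 1) * h -> (kk h t <= k)%nat.
Proof.
  intros Hh Ht H. destruct (kk_spec h t Hh Ht) as [H1 _].
  assert (INR (kk h t) < INR (S k)).
  { rewrite S_INR. apply Rmult_lt_reg_r with h; lra. }
  apply INR_lt in H0. lia.
Qed.

Lemma kk_mono h s t : 0 < h -> 0 <= s <= t -> (kk h s <= kk h t)%nat.
Proof.
  intros Hh Hs. apply kk_le; try lra. destruct (kk_spec h s Hh ltac:(lra)). lra.
Qed.

Lemma kk_node h i : 0 < h -> kk h (INR i * h) = i.
Proof.
  intros Hh. assert (0 <= INR i * h) by (apply Rmult_le_pos; [apply pos_INR|lra]).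
  apply Nat.le_antisymm.
  - apply kk_ge; auto. nra.
  - apply kk_le; auto; lra.
Qed.

Lemma poly_node Phi h i : 0 < h -> poly Phi h (INR i * h) = ex Phi h i.
Proof.
  intros Hh. unfold poly. rewrite kk_node by auto. ring.
Qed.

Lemma poly0 Phi h : 0 < h -> poly Phi h 0 = 0.
Proof.
  intros Hh. replace 0 with (INR 0 * h) at 1 by (simpl; ring).
  rewrite poly_node by auto. reflexivity.
Qed.

Lemma ex_slope Phi h L e (j m : nat) : 0 < h -> (j <= m)%nat ->
  (forall i, (j <= i < m)%nat -> Rabs (sig Phi h i - L) <= e) ->
  Rabs (ex Phi h m - ex Phi h j - L * ((INR m - INR j) * h)) <= e * ((INR m - INR j) * h).
Proof.
  intros Hh Hjm. induction Hjm as [|m Hjm IH]; intros Hs.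
  - replace (ex Phi h j - ex Phi h j - L * ((INR j - INR j) * h)) with 0 by ring.
    rewrite Rabs_R0. replace (e * ((INR j - INR j) * h)) with 0 by ring. lra.
  - rewrite S_INR.
    specialize (IH (fun i Hi => Hs i ltac:(lia))).
    specialize (Hs m ltac:(lia)).
    replace (ex Phi h (S m) - ex Phi h j - L * ((INR m + 1 - INR j) * h)) with
      ((ex Phi h m - ex Phi h j - L * ((INR m - INR j) * h)) + h * (sig Phi h m - L))
      by (simpl; unfold sig; ring).
    eapply Rle_trans; [apply Rabs_triang|].
    pose proof (abs_mul_le h _ _ ltac:(lra) Hs). nra.
Qed.

Lemma poly_slope Phi h L e s t : 0 < h -> 0 <= s <= t ->
  (forall i, (kk h s <= i <= kk h t)%nat -> Rabs (sig Phi h i - L) <= e) ->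
  Rabs (poly Phi h t - poly Phi h s - L * (t - s)) <= e * (t - s).
Proof.
  intros Hh Hst Hs.
  pose proof (kk_mono h s t Hh Hst) as Hjm.
  pose proof (kk_spec h s Hh ltac:(lra)) as [Hs1 Hs2].
  pose proof (kk_spec h t Hh ltac:(lra)) as [Ht1 Ht2].
  unfold poly. revert Hs Hjm Hs1 Hs2 Ht1 Ht2.
  set (j := kk h s). set (m := kk h t). intros Hs Hjm Hs1 Hs2 Ht1 Ht2.
  destruct (Nat.eq_dec j m) as [E|E].
  - rewrite <- E in *.
    replace (ex Phi h j + (t - INR j * h) * sig Phi h j -
      (ex Phi h j + (s - INR j * h) * sig Phi h j) - L * (t - s)) with
      ((t - s) * (sig Phi h j - L)) by ring.
    rewrite (Rmult_comm e). apply abs_mul_le; [lra|]. apply Hs; lia.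
  - assert (Hsj : (S j <= m)%nat) by lia.
    pose proof (ex_slope Phi h L e (S j) m Hh Hsj (fun i Hi => Hs i ltac:(lia))) as H2.
    pose proof (Hs m ltac:(lia)) as Hm. pose proof (Hs j ltac:(lia)) as Hj.
    rewrite S_INR in H2.
    replace (ex Phi h m + (t - INR m * h) * sig Phi h m -
      (ex Phi h j + (s - INR j * h) * sig Phi h j) - L * (t - s)) with
      ((t - INR m * h) * (sig Phi h m - L) +
       (ex Phi h m - ex Phi h (S j) - L * ((INR m - (INR j + 1)) * h)) +
       ((INR j + 1) * h - s) * (sig Phi h j - L)) by (simpl; unfold sig; ring).
    pose proof (abs_mul_le (t - INR m * h) _ _ ltac:(lra) Hm) as A1.
    pose proof (abs_mul_le ((INR j + 1) * h - s) _ _ ltac:(lra) Hj) as A3.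
    eapply Rle_trans; [apply Rabs_triang|].
    eapply Rle_trans; [apply Rplus_le_compat_r; apply Rabs_triang|].
    eapply Rle_trans; [apply Rplus_le_compat; [apply Rplus_le_compat; [exact A1|exact H2]|exact A3]|].
    right; ring.
Qed.

Definition UC2 (Phi : R -> R -> R) := forall e, 0 < e -> exists d, 0 < d /\
  forall t1 t2 Y1 Y2, Rabs (t1 - t2) < d -> Rabs (Y1 - Y2) < d ->
    Rabs (Phi t1 Y1 - Phi t2 Y2) < e.
Definition Bnd (Phi : R -> R -> R) M := forall t Y, Rabs (Phi t Y) <= M.

Lemma poly_lip Phi h M s t : 0 < h -> Bnd Phi M -> 0 <= s <= t ->
  Rabs (poly Phi h t - poly Phi h s) <= M * (t - s).
Proof.
  intros Hh HB Hst.
  pose proof (poly_slope Phi h 0 M s t Hh Hst) as H.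
  replace (poly Phi h t - poly Phi h s) with (poly Phi h t - poly Phi h s - 0 * (t - s)) by ring.
  apply H. intros i _. rewrite Rminus_0_r. apply HB.
Qed.

Lemma poly_lip' Phi h M s t : 0 < h -> Bnd Phi M -> 0 <= s -> 0 <= t ->
  Rabs (poly Phi h t - poly Phi h s) <= M * Rabs (t - s).
Proof.
  intros Hh HB Hs Ht. destruct (Rle_or_lt s t).
  - rewrite (Rabs_pos_eq (t - s)) by lra. apply poly_lip; auto; lra.
  - rewrite Rabs_minus_sym, (Rabs_minus_sym t s), (Rabs_pos_eq (s - t)) by lra.
    apply poly_lip; auto; lra.
Qed.

Lemma euler_est Phi M : 0 < M -> Bnd Phi M -> UC2 Phi ->
  forall e, 0 < e -> exists d, 0 < d /\ forall h, 0 < h -> h <= d ->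
  forall s t, 0 <= s <= t -> t - s <= d ->
  Rabs (poly Phi h t - poly Phi h s - Phi s (poly Phi h s) * (t - s)) <= e * (t - s).
Proof.
  intros HM HB HU e He. destruct (HU e He) as [d1 [Hd1 Hd]].
  exists (Rmin d1 (d1 / M) / 2). split.
  { assert (0 < Rmin d1 (d1/M)) by (apply Rmin_glb_lt; [lra|apply Rdiv_lt_0_compat; lra]). lra. }
  intros h Hh Hhd s t Hst Htd.
  assert (Hm1 : Rmin d1 (d1 / M) <= d1) by apply Rmin_l.
  assert (Hm2 : Rmin d1 (d1 / M) <= d1 / M) by apply Rmin_r.
  apply poly_slope; auto. intros i [Hi1 Hi2].
  pose proof (kk_spec h s Hh ltac:(lra)) as [Hs1 Hs2].
  pose proof (kk_spec h t Hh ltac:(lra)) as [Ht1 Ht2].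
  apply le_INR in Hi1. apply le_INR in Hi2.
  assert (T1 : INR (kk h s) * h <= INR i * h) by (apply Rmult_le_compat_r; lra).
  assert (T2 : INR i * h <= INR (kk h t) * h) by (apply Rmult_le_compat_r; lra).
  assert (Hti : Rabs (INR i * h - s) < d1).
  { apply Rabs_def1; lra. }
  assert (Hti0 : 0 <= INR i * h) by (apply Rmult_le_pos; [apply pos_INR|lra]).
  unfold sig. rewrite <- (poly_node Phi h i Hh).
  left. apply Hd; auto.
  eapply Rle_lt_trans; [apply (poly_lip' Phi h M); auto; lra|].
  assert (Rabs (INR i * h - s) < d1 / M) by (apply Rabs_def1; lra).
  apply Rmult_lt_compat_l with (r := M) in H; auto.
  replace (M * (d1 / M)) with d1 in H by (field; lra). exact H.
Qed.

Lemma compare (Phi : R -> R -> R) u w L e1 e2 d : 0 < L -> 0 < d -> 0 <= e1 -> 0 <= e2 ->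
  (forall t Y1 Y2, Y1 <= Y2 -> Phi t Y2 <= Phi t Y1) ->
  (forall s t, 0 <= s <= t -> t <= 1 -> Rabs (u t - u s) <= L * (t - s)) ->
  (forall s t, 0 <= s <= t -> t <= 1 -> Rabs (w t - w s) <= L * (t - s)) ->
  (forall s t, 0 <= s <= t -> t <= 1 -> t - s <= d ->
     u t - u s <= Phi s (u s) * (t - s) + e1 * (t - s)) ->
  (forall s t, 0 <= s <= t -> t <= 1 -> t - s <= d ->
     Phi s (w s) * (t - s) - e2 * (t - s) <= w t - w s) ->
  u 0 <= w 0 -> forall t, 0 <= t <= 1 -> u t - w t <= (e1 + e2) * t.
Proof.
  intros HL Hd He1 He2 Hmono Lu Lw Su Sw H0 t Ht.
  apply approx_le. intros th Hth.
  destruct (nat_large (1 / d + 2 * L / th)) as [n Hn].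
  assert (P1 : 0 < 1 / d) by (apply Rdiv_lt_0_compat; lra).
  assert (P2 : 0 < 2 * L / th) by (apply Rdiv_lt_0_compat; lra).
  assert (Hn0 : 0 < INR n) by lra.
  set (D := t / INR n).
  assert (HD : D * INR n = t) by (unfold D; field; lra).
  assert (HD0 : 0 <= D) by (unfold D; apply Rdiv_le_0_compat; lra).
  assert (HDd : D <= d).
  { assert (1 / d * d = 1) by (field; lra).
    assert (INR n * d > 1) by nra. nra. }
  assert (HDth : 2 * L * D <= th).
  { assert (2 * L / th * th = 2 * L) by (field; lra).
    assert (INR n * th > 2 * L) by nra. nra. }
  assert (Claim : forall k, (k <= n)%nat ->
    u (INR k * D) - w (INR k * D) <= (e1 + e2) * (INR k * D) + th).
  { induction k as [|k IH]; intros Hk.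
    - simpl. rewrite Rmult_0_l. lra.
    - specialize (IH ltac:(lia)).
      apply le_INR in Hk. rewrite S_INR in *.
      assert (Hk0 : 0 <= INR k) by apply pos_INR.
      assert (Hs0 : 0 <= INR k * D) by nra.
      assert (Hs1 : (INR k + 1) * D <= t) by nra.
      set (s := INR k * D) in *.
      replace ((INR k + 1) * D) with (s + D) in * by (unfold s; ring).
      destruct (Rle_or_lt 0 (u s - w s)) as [Hp|Hp].
      + pose proof (Hmono s (w s) (u s) ltac:(lra)).
        pose proof (Su s (s + D) ltac:(lra) ltac:(lra) ltac:(lra)).
        pose proof (Sw s (s + D) ltac:(lra) ltac:(lra) ltac:(lra)).
        replace (s + D - s) with D in * by ring. nra.
      + pose proof (Lu s (s + D) ltac:(lra) ltac:(lra)).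
        pose proof (Lw s (s + D) ltac:(lra) ltac:(lra)).
        replace (s + D - s) with D in * by ring.
        apply Rabs_le_between in H. apply Rabs_le_between in H1. nra. }
  specialize (Claim n (Nat.le_refl n)). rewrite Rmult_comm, HD in Claim. exact Claim.
Qed.

Definition Un Phi (n : nat) (t : R) := poly Phi (/ INR (S n)) t.

Lemma hpos n : 0 < / INR (S n).
Proof. apply Rinv_0_lt_compat. apply lt_0_INR. lia. Qed.

Lemma Un_good Phi M : 0 < M -> Bnd Phi M -> UC2 Phi ->
  forall e, 0 < e -> exists d, 0 < d /\ exists N0, forall n, (N0 <= n)%nat ->
  forall s t, 0 <= s <= t -> t - s <= d ->
  Rabs (Un Phi n t - Un Phi n s - Phi s (Un Phi n s) * (t - s)) <= e * (t - s).
Proof.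
  intros HM HB HU e He. destruct (euler_est Phi M HM HB HU e He) as [d [Hd H]].
  exists d. split; auto. destruct (nat_large (1 / d)) as [N0 HN0]. exists N0.
  intros n Hn s t Hst Htd. unfold Un. apply H; auto. apply hpos.
  assert (HI : INR N0 <= INR (S n)) by (apply le_INR; lia).
  assert (0 < INR (S n)) by (apply lt_0_INR; lia).
  assert (1 / d * d = 1) by (field; lra).
  assert (/ INR (S n) * INR (S n) = 1) by (field; lra).
  assert (0 < / INR (S n)) by apply hpos.
  nra.
Qed.

Definition Lip (Y : R -> R) M := forall s t, 0 <= s <= t -> t <= 1 ->
  Rabs (Y t - Y s) <= M * (t - s).
Definition Mono (Phi : R -> R -> R) := forall t Y1 Y2, Y1 <= Y2 -> Phi t Y2 <= Phi t Y1.

Lemma Un_lip Phi M n : Bnd Phi M -> Lip (Un Phi n) M.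
Proof. intros HB s t Hst _. unfold Un. apply poly_lip; auto. apply hpos. Qed.

Lemma Un_cauchy Phi M t : 0 < M -> Bnd Phi M -> UC2 Phi -> Mono Phi -> 0 <= t <= 1 ->
  ex_finite_lim_seq (fun n => Un Phi n t).
Proof.
  intros HM HB HU Hmo Ht. apply ex_lim_seq_cauchy_corr. intros [eps Heps]. simpl.
  destruct (Un_good Phi M HM HB HU (eps / 4) ltac:(lra)) as [d [Hd [N0 HN]]].
  exists N0. intros n m Hn Hm.
  assert (K : forall n m, (N0 <= n)%nat -> (N0 <= m)%nat ->
            Un Phi n t - Un Phi m t <= (eps/4 + eps/4) * t).
  { clear n m Hn Hm. intros n m Hn Hm.
    apply (compare Phi (Un Phi n) (Un Phi m) M (eps/4) (eps/4) d); auto; try lra.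
    - intros s t' Hs Ht'. apply Un_lip; auto.
    - intros s t' Hs Ht'. apply Un_lip; auto.
    - intros s t' Hs Ht' Hd'. specialize (HN n Hn s t' Hs Hd').
      apply Rabs_le_between in HN. lra.
    - intros s t' Hs Ht' Hd'. specialize (HN m Hm s t' Hs Hd').
      apply Rabs_le_between in HN. lra.
    - unfold Un. rewrite !poly0 by apply hpos. lra. }
  pose proof (K n m Hn Hm). pose proof (K m n Hm Hn).
  apply Rabs_def1; nra.
Qed.

Definition Yl Phi t := real (Lim_seq (fun n => Un Phi n t)).

Lemma Yl_lim Phi M t : 0 < M -> Bnd Phi M -> UC2 Phi -> Mono Phi -> 0 <= t <= 1 ->
  is_lim_seq (fun n => Un Phi n t) (Yl Phi t).
Proof.
  intros HM HB HU Hmo Ht. destruct (Un_cauchy Phi M t HM HB HU Hmo Ht) as [l Hl].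
  unfold Yl. rewrite (is_lim_seq_unique _ _ Hl). simpl. exact Hl.
Qed.

Lemma lim_close u l : is_lim_seq u (Finite l) -> forall th, 0 < th ->
  exists N, forall n, (N <= n)%nat -> Rabs (u n - l) < th.
Proof.
  intros H th Hth. apply is_lim_seq_spec in H. exact (H (mkposreal th Hth)).
Qed.

Lemma Yl0 Phi : Yl Phi 0 = 0.
Proof.
  unfold Yl. rewrite (Lim_seq_ext _ (fun _ => 0)).
  - rewrite Lim_seq_const. reflexivity.
  - intros n. unfold Un. apply poly0, hpos.
Qed.

Lemma Yl_lip Phi M : 0 < M -> Bnd Phi M -> UC2 Phi -> Mono Phi -> Lip (Yl Phi) M.
Proof.
  intros HM HB HU Hmo s t Hst Ht1.
  pose proof (Yl_lim Phi M t HM HB HU Hmo ltac:(lra)) as Lt.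
  pose proof (Yl_lim Phi M s HM HB HU Hmo ltac:(lra)) as Ls.
  apply Rabs_le_between. split; apply approx_le; intros th Hth.
  - destruct (lim_close _ _ Lt (th/2) ltac:(lra)) as [N1 H1].
    destruct (lim_close _ _ Ls (th/2) ltac:(lra)) as [N2 H2].
    specialize (H1 (max N1 N2) ltac:(lia)). specialize (H2 (max N1 N2) ltac:(lia)).
    pose proof (Un_lip Phi M (max N1 N2) HB s t Hst Ht1) as L.
    apply Rabs_le_between in L. apply Rabs_def2 in H1. apply Rabs_def2 in H2. lra.
  - destruct (lim_close _ _ Lt (th/2) ltac:(lra)) as [N1 H1].
    destruct (lim_close _ _ Ls (th/2) ltac:(lra)) as [N2 H2].
    specialize (H1 (max N1 N2) ltac:(lia)). specialize (H2 (max N1 N2) ltac:(lia)).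
    pose proof (Un_lip Phi M (max N1 N2) HB s t Hst Ht1) as L.
    apply Rabs_le_between in L. apply Rabs_def2 in H1. apply Rabs_def2 in H2. lra.
Qed.

Definition ExactEst (Phi : R -> R -> R) (Y : R -> R) := forall e, 0 < e -> exists d, 0 < d /\
  forall s t, 0 <= s <= t -> t <= 1 -> t - s <= d ->
  Rabs (Y t - Y s - Phi s (Y s) * (t - s)) <= e * (t - s).

Lemma Yl_est Phi M : 0 < M -> Bnd Phi M -> UC2 Phi -> Mono Phi -> ExactEst Phi (Yl Phi).
Proof.
  intros HM HB HU Hmo e He.
  destruct (Un_good Phi M HM HB HU e He) as [d [Hd [N0 HN]]].
  exists d. split; auto. intros s t Hst Ht1 Htd.
  pose proof (Yl_lim Phi M t HM HB HU Hmo ltac:(lra)) as Lt.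
  pose proof (Yl_lim Phi M s HM HB HU Hmo ltac:(lra)) as Ls.
  apply Rabs_le_between. split; apply approx_le; intros th Hth;
  set (th0 := th / 4);
  destruct (HU th0 ltac:(unfold th0; lra)) as [dt [Hdt Hc]];
  destruct (lim_close _ _ Lt th0 ltac:(unfold th0; lra)) as [N1 H1];
  destruct (lim_close _ _ Ls (Rmin th0 dt) ltac:(apply Rmin_glb_lt; unfold th0; lra)) as [N2 H2];
  set (n := max N0 (max N1 N2));
  specialize (H1 n ltac:(unfold n; lia)); specialize (H2 n ltac:(unfold n; lia));
  specialize (HN n ltac:(unfold n; lia) s t Hst Htd);
  assert (H2' : Rabs (Un Phi n s - Yl Phi s) < dt) by (eapply Rlt_le_trans; [exact H2|apply Rmin_r]);
  assert (H2'' : Rabs (Un Phi n s - Yl Phi s) < th0) by (eapply Rlt_le_trans; [exact H2|apply Rmin_l]);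
  assert (Hcc := Hc s s (Un Phi n s) (Yl Phi s) ltac:(rewrite Rminus_diag, Rabs_R0; lra) H2');
  apply Rabs_le_between in HN; apply Rabs_def2 in H1; apply Rabs_def2 in H2'';
  apply Rabs_def2 in Hcc; unfold th0 in *; nra.
Qed.

Lemma quot_bound A hh c : hh <> 0 -> Rabs A <= c * Rabs hh -> Rabs (A / hh) <= c.
Proof.
  intros H0 H. assert (E : Rabs (A / hh) * Rabs hh = Rabs A).
  { rewrite <- Rabs_mult. f_equal. field. auto. }
  assert (0 < Rabs hh) by (apply Rabs_pos_lt; auto). nra.
Qed.

Lemma deriv_est Phi Y M x : 0 < M -> UC2 Phi -> Lip Y M -> ExactEst Phi Y -> 0 < x < 1 ->
  derivable_pt_lim Y x (Phi x (Y x)).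
Proof.
  intros HM HU HL HE Hx eps Heps.
  destruct (HE (eps/3) ltac:(lra)) as [d1 [Hd1 H1]].
  destruct (HU (eps/3) ltac:(lra)) as [d2 [Hd2 H2]].
  set (dl := Rmin d1 (Rmin (d2/2) (Rmin (d2/(2*M)) (Rmin x (1-x))))).
  assert (Hdl : 0 < dl).
  { unfold dl. repeat apply Rmin_glb_lt; try lra. apply Rdiv_lt_0_compat; lra. }
  assert (Q1 : dl <= d1) by apply Rmin_l.
  assert (Q2 : dl <= d2/2) by (eapply Rle_trans; [apply Rmin_r|apply Rmin_l]).
  assert (Q3 : dl <= d2/(2*M)) by (eapply Rle_trans; [apply Rmin_r|];
      eapply Rle_trans; [apply Rmin_r|apply Rmin_l]).
  assert (Q4 : dl <= x) by (eapply Rle_trans; [apply Rmin_r|];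
      eapply Rle_trans; [apply Rmin_r|]; eapply Rle_trans; [apply Rmin_r|apply Rmin_l]).
  assert (Q5 : dl <= 1 - x) by (eapply Rle_trans; [apply Rmin_r|];
      eapply Rle_trans; [apply Rmin_r|]; eapply Rle_trans; [apply Rmin_r|apply Rmin_r]).
  exists (mkposreal dl Hdl). simpl. intros hh Hh0 Hhd.
  apply Rabs_def2 in Hhd.
  replace ((Y (x + hh) - Y x) / hh - Phi x (Y x)) with
    ((Y (x + hh) - Y x - Phi x (Y x) * hh) / hh) by (field; auto).
  apply Rle_lt_trans with (eps * (2/3) * 1 + 0); [|lra].
  rewrite Rmult_1_r, Rplus_0_r.
  apply quot_bound; auto.
  destruct (Rle_or_lt 0 hh) as [Hp|Hn].
  - assert (0 < hh) by (destruct Hp; auto; congruence).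
    specialize (H1 x (x + hh) ltac:(lra) ltac:(lra) ltac:(lra)).
    replace (x + hh - x) with hh in H1 by ring.
    rewrite (Rabs_pos_eq hh) by lra. nra.
  - specialize (H1 (x + hh) x ltac:(lra) ltac:(lra) ltac:(lra)).
    replace (x - (x + hh)) with (- hh) in H1 by ring.
    pose proof (HL (x + hh) x ltac:(lra) ltac:(lra)) as L.
    replace (x - (x + hh)) with (- hh) in L by ring.
    assert (Hm : M * (- hh) < d2).
    { assert (M * dl <= d2 / 2).
      { apply Rmult_le_compat_l with (r := M) in Q3; [|lra].
        replace (M * (d2 / (2 * M))) with (d2/2) in Q3 by (field; lra). exact Q3. }
      nra. }
    assert (Hc := H2 (x + hh) x (Y (x + hh)) (Y x)
      ltac:(replace (x + hh - x) with hh by ring; apply Rabs_def1; lra)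
      ltac:(rewrite Rabs_minus_sym; lra)).
    rewrite (Rabs_left hh) by lra.
    apply Rabs_le_between in H1. apply Rabs_def2 in Hc.
    apply Rabs_le_between.
    assert (P1 : (Phi (x + hh) (Y (x + hh)) - Phi x (Y x)) * (- hh) <= eps/3 * (-hh)) by
      (apply Rmult_le_compat_r; lra).
    assert (P2 : - (eps/3) * (-hh) <= (Phi (x + hh) (Y (x + hh)) - Phi x (Y x)) * (- hh)) by
      (apply Rmult_le_compat_r; lra).
    split; lra.
Qed.

Definition clamp lo hi x := Rmax lo (Rmin hi x).

Lemma clamp_range lo hi x : lo <= hi -> lo <= clamp lo hi x <= hi.
Proof. intros H. unfold clamp, Rmax, Rmin. repeat destruct Rle_dec; lra. Qed.

Lemma clamp_id lo hi x : lo <= x <= hi -> clamp lo hi x = x.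
Proof. intros H. unfold clamp, Rmax, Rmin. repeat destruct Rle_dec; lra. Qed.

Lemma clamp_lip lo hi x y : lo <= hi -> Rabs (clamp lo hi x - clamp lo hi y) <= Rabs (x - y).
Proof.
  intros H. pose proof (Rle_abs (x - y)). pose proof (Rle_abs (-(x - y))).
  rewrite Rabs_Ropp in H1. apply Rabs_le_between.
  unfold clamp, Rmax, Rmin. repeat destruct Rle_dec; lra.
Qed.

Lemma clamp_mono lo hi x y : lo <= hi -> x <= y -> clamp lo hi x <= clamp lo hi y.
Proof. intros H Hxy. unfold clamp, Rmax, Rmin. repeat destruct Rle_dec; lra. Qed.

Definition UC (F : R -> R) := forall e, 0 < e -> exists d, 0 < d /\
  forall x y, Rabs (x - y) < d -> Rabs (F x - F y) < e.
Definition RC lo hi (F : R -> R) := forall x, lo <= x <= hi -> forall e, 0 < e ->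
  exists d, 0 < d /\ forall y, lo <= y <= hi -> Rabs (y - x) < d -> Rabs (F y - F x) < e.

Lemma cont_clamp lo hi F : lo <= hi -> RC lo hi F -> forall x, lo <= x <= hi ->
  continuity_pt (fun z => F (clamp lo hi z)) x.
Proof.
  intros Hlh HR x Hx e He. destruct (HR x Hx e He) as [d [Hd H]].
  exists d. split; [lra|]. intros y [_ Hy]. simpl in *. unfold R_dist in *.
  rewrite (clamp_id lo hi x Hx). apply H. apply clamp_range; auto.
  eapply Rle_lt_trans; [|exact Hy].
  rewrite <- (clamp_id lo hi x Hx) at 1. apply clamp_lip; auto.
Qed.

Lemma UC_clamp lo hi F : lo <= hi -> RC lo hi F -> UC (fun z => F (clamp lo hi z)).
Proof.
  intros Hlh HR e He.
  pose proof (Heine (fun z => F (clamp lo hi z)) (fun c => lo <= c <= hi) (compact_P3 lo hi)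
    (cont_clamp lo hi F Hlh HR)) as HU.
  destruct (HU (mkposreal e He)) as [[d Hd] Hdd]. simpl in *.
  exists d. split; auto. intros x y Hxy.
  pose proof (clamp_range lo hi x Hlh). pose proof (clamp_range lo hi y Hlh).
  specialize (Hdd (clamp lo hi x) (clamp lo hi y) H H0
    ltac:(eapply Rle_lt_trans; [apply clamp_lip; auto|exact Hxy])).
  rewrite (clamp_id lo hi (clamp lo hi x) H), (clamp_id lo hi (clamp lo hi y) H0) in Hdd. exact Hdd.
Qed.

Lemma contpt_RC lo hi F : (forall x, lo <= x <= hi -> continuity_pt F x) -> RC lo hi F.
Proof.
  intros H x Hx e He. destruct (H x Hx e He) as [a [Ha Hb]].
  exists a. split; [lra|]. intros y Hy Hyx.
  destruct (Req_dec y x) as [->|Hne]; [rewrite Rminus_diag, Rabs_R0; lra|].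
  apply (Hb y). split; [split; [exact I|auto]|exact Hyx].
Qed.

Lemma UC_flip F : UC F -> UC (fun t => F (1 - t)).
Proof.
  intros H e He. destruct (H e He) as [d [Hd Hdd]]. exists d. split; auto.
  intros x y Hxy. apply Hdd. replace (1 - x - (1 - y)) with (-(x - y)) by ring.
  rewrite Rabs_Ropp. exact Hxy.
Qed.

Lemma UC_plus_c c F : UC F -> UC (fun t => c + F t).
Proof.
  intros H e He. destruct (H e He) as [d [Hd Hdd]]. exists d. split; auto.
  intros x y Hxy. replace (c + F x - (c + F y)) with (F x - F y) by ring. auto.
Qed.

Lemma UC2_Phi a b G B : UC a -> UC b -> UC G -> 0 <= B ->
  (forall t, Rabs (b t) <= B) -> (forall Y, Rabs (G Y) <= 1) ->
  UC2 (fun t Y => a t - b t * G Y).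
Proof.
  intros Ha Hb HG HB Hbb HGb e He.
  destruct (Ha (e/3) ltac:(lra)) as [da [Hda Da]].
  destruct (Hb (e/3) ltac:(lra)) as [db [Hdb Db]].
  assert (HB1 : 0 < 3 * (B + 1)) by lra.
  destruct (HG (e/(3*(B+1))) ltac:(apply Rdiv_lt_0_compat; lra)) as [dG [HdG DG]].
  exists (Rmin da (Rmin db dG)). split.
  { repeat apply Rmin_glb_lt; auto. }
  intros t1 t2 Y1 Y2 Ht HY.
  assert (Ht1 : Rabs (t1 - t2) < da) by (eapply Rlt_le_trans; [exact Ht|apply Rmin_l]).
  assert (Ht2 : Rabs (t1 - t2) < db) by (eapply Rlt_le_trans; [exact Ht|];
    eapply Rle_trans; [apply Rmin_r|apply Rmin_l]).
  assert (HY1 : Rabs (Y1 - Y2) < dG) by (eapply Rlt_le_trans; [exact HY|];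
    eapply Rle_trans; [apply Rmin_r|apply Rmin_r]).
  specialize (Da _ _ Ht1). specialize (Db _ _ Ht2). specialize (DG _ _ HY1).
  replace (a t1 - b t1 * G Y1 - (a t2 - b t2 * G Y2)) with
    ((a t1 - a t2) + (-((b t1 - b t2) * G Y1)) + (-(b t2 * (G Y1 - G Y2)))) by ring.
  eapply Rle_lt_trans; [apply Rabs_triang|].
  eapply Rle_lt_trans; [apply Rplus_le_compat_r; apply Rabs_triang|].
  rewrite !Rabs_Ropp, !Rabs_mult.
  pose proof (HGb Y1). pose proof (Hbb t2).
  pose proof (Rabs_pos (b t1 - b t2)). pose proof (Rabs_pos (G Y1 - G Y2)).
  assert (E1 : Rabs (b t1 - b t2) * Rabs (G Y1) <= Rabs (b t1 - b t2)).
  { rewrite <- (Rmult_1_r (Rabs (b t1 - b t2))) at 2. apply Rmult_le_compat_l; auto. }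
  assert (E2 : Rabs (b t2) * Rabs (G Y1 - G Y2) <= B * (e / (3 * (B + 1)))).
  { apply Rmult_le_compat; auto using Rabs_pos. lra. }
  assert (E3 : B * (e / (3 * (B + 1))) < e / 3).
  { apply Rmult_lt_reg_r with (3 * (B + 1)); [lra|].
    replace (B * (e / (3 * (B + 1))) * (3 * (B + 1))) with (B * e) by (field; lra).
    replace (e / 3 * (3 * (B + 1))) with (B * e + e) by field. lra. }
  lra.
Qed.

Lemma Lip_abs Y M : Lip Y M -> forall s t, 0 <= s <= 1 -> 0 <= t <= 1 ->
  Rabs (Y t - Y s) <= M * Rabs (t - s).
Proof.
  intros H s t Hs Ht. destruct (Rle_or_lt s t).
  - rewrite (Rabs_pos_eq (t - s)) by lra. apply H; lra.
  - rewrite Rabs_minus_sym, (Rabs_minus_sym t s), (Rabs_pos_eq (s - t)) by lra. apply H; lra.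
Qed.

Lemma Lip_mono Y M M' : M <= M' -> Lip Y M -> Lip Y M'.
Proof.
  intros HM H s t Hst Ht. eapply Rle_trans; [apply H; auto|].
  apply Rmult_le_compat_r; lra.
Qed.

Definition gg (e y : R) := sqrt (y * (2 * e + y)) / (e + y).

Lemma gg_cont e y : 0 < e -> 0 <= y -> continuity_pt (gg e) y.
Proof.
  intros He Hy. apply continuity_pt_filterlim. unfold gg.
  apply (continuous_mult (fun y => sqrt (y * (2 * e + y))) (fun y => / (e + y))).
  - apply continuous_sqrt_comp.
    apply (continuous_mult (fun y => y) (fun y => 2 * e + y)).
    + apply continuous_id.
    + apply (continuous_plus (fun _ => 2 * e) (fun y => y)).
      * apply continuous_const.
      * apply continuous_id.
  - apply continuous_Rinv_comp.
    + apply (continuous_plus (fun _ => e) (fun y => y)).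
      * apply continuous_const.
      * apply continuous_id.
    + lra.
Qed.

Lemma gg0 e : 0 < e -> gg e 0 = 0.
Proof. intros He. unfold gg. rewrite Rmult_0_l, sqrt_0. unfold Rdiv. ring. Qed.

Lemma gg_alt e y : 0 < e -> 0 <= y -> gg e y = sqrt (1 - e * e / ((e + y) * (e + y))).
Proof.
  intros He Hy. unfold gg.
  replace (1 - e * e / ((e + y) * (e + y))) with (y * (2 * e + y) / ((e + y) * (e + y)))
    by (field; lra).
  rewrite sqrt_div_alt by nra. rewrite sqrt_square by lra. reflexivity.
Qed.

Lemma gg_range e y : 0 < e -> 0 <= y -> 0 <= gg e y <= 1.
Proof.
  intros He Hy. rewrite gg_alt by auto. split; [apply sqrt_pos|].
  apply Rle_trans with (sqrt 1); [|rewrite sqrt_1; lra]. apply sqrt_le_1_alt.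
  assert (0 <= e * e / ((e + y) * (e + y))) by (apply Rdiv_le_0_compat; nra). lra.
Qed.

Lemma gg_mono e y1 y2 : 0 < e -> 0 <= y1 <= y2 -> gg e y1 <= gg e y2.
Proof.
  intros He Hy. rewrite !gg_alt by lra. apply sqrt_le_1_alt.
  assert (e * e / ((e + y2) * (e + y2)) <= e * e / ((e + y1) * (e + y1))).
  { unfold Rdiv. apply Rmult_le_compat_l; [nra|]. apply Rinv_le_contravar; nra. }
  lra.
Qed.

Lemma RC_of_cont f : cont_on01 f -> RC 0 1 f.
Proof.
  intros Hf x Hx e He. specialize (Hf x Hx).
  unfold cont_on01_at in Hf. apply filterlim_locally with (eps := mkposreal e He) in Hf.
  destruct Hf as [[d Hd] Hdd]. exists d. split; auto.
  intros y Hy Hyx. apply (Hdd y Hyx Hy).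
Qed.

Lemma RC_of_deriv g dg : (forall x, I01 x -> deriv01_at g x (dg x)) -> RC 0 1 g.
Proof.
  intros Hd x Hx e He. specialize (Hd x Hx). unfold deriv01_at in Hd.
  apply filterlim_locally with (eps := mkposreal 1 Rlt_0_1) in Hd.
  destruct Hd as [[d Hd] Hdd]. simpl in *.
  set (K := Rabs (dg x) + 1).
  assert (HK : 0 < K) by (unfold K; pose proof (Rabs_pos (dg x)); lra).
  exists (Rmin d (e / K)). split.
  { apply Rmin_glb_lt; auto. apply Rdiv_lt_0_compat; lra. }
  intros y Hy Hyx.
  destruct (Req_dec y x) as [->|Hne]; [rewrite Rminus_diag, Rabs_R0; lra|].
  assert (Hy1 : Rabs (y - x) < d) by (eapply Rlt_le_trans; [exact Hyx|apply Rmin_l]).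
  assert (Hy2 : Rabs (y - x) < e / K) by (eapply Rlt_le_trans; [exact Hyx|apply Rmin_r]).
  specialize (Hdd y Hy1 (conj Hy Hne)). change (Rabs ((g y - g x) / (y - x) - dg x) < 1) in Hdd.
  assert (Hq : Rabs ((g y - g x) / (y - x)) < K).
  { unfold K. pose proof (Rabs_triang_inv ((g y - g x) / (y - x)) (dg x)). lra. }
  assert (E : g y - g x = (g y - g x) / (y - x) * (y - x)) by (field; lra).
  rewrite E, Rabs_mult.
  assert (0 < Rabs (y - x)) by (apply Rabs_pos_lt; lra).
  apply Rlt_le_trans with (K * Rabs (y - x)).
  - apply Rmult_lt_compat_r; auto.
  - apply Rmult_lt_compat_l with (r := K) in Hy2; auto.
    replace (K * (e / K)) with e in Hy2 by (field; lra). lra.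
Qed.

Definition QQ e S v := sqrt (e * e + e * S * (v * v)).
Definition psi e S v := QQ e S v - e.
Definition dpsi e S v := e * S * v / QQ e S v.

Lemma QQ_ge e S v : 0 < e -> 0 <= S -> e <= QQ e S v.
Proof.
  intros He HS. unfold QQ. rewrite <- (sqrt_square e) at 1 by lra.
  apply sqrt_le_1_alt. assert (0 <= e * S * (v * v)) by (apply Rmult_le_pos; nra). lra.
Qed.

Lemma QQ_sq e S v : 0 < e -> 0 <= S -> QQ e S v * QQ e S v = e * e + e * S * (v * v).
Proof.
  intros He HS. unfold QQ. apply sqrt_sqrt.
  assert (0 <= e * S * (v * v)) by (apply Rmult_le_pos; nra). nra.
Qed.

Lemma sqrt_ge_lin P R : 0 <= P -> R * R <= P -> R <= sqrt P.
Proof.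
  intros HP H. destruct (Rle_or_lt R 0).
  - pose proof (sqrt_pos P). lra.
  - rewrite <- (sqrt_square R) by lra. apply sqrt_le_1_alt. exact H.
Qed.

Lemma psi_convex e S v w : 0 < e -> 0 <= S ->
  dpsi e S v * (w - v) <= psi e S w - psi e S v.
Proof.
  intros He HS. unfold psi, dpsi.
  pose proof (QQ_ge e S v He HS). pose proof (QQ_ge e S w He HS).
  pose proof (QQ_sq e S v He HS). pose proof (QQ_sq e S w He HS).
  set (Qv := QQ e S v) in *. set (Qw := QQ e S w) in *.
  assert (Key : e * e + e * S * (v * w) <= Qv * Qw).
  { assert (Qv * Qw = sqrt ((e * e + e * S * (v * v)) * (e * e + e * S * (w * w)))).
    { unfold Qv, Qw, QQ. rewrite sqrt_mult; auto; apply Rplus_le_le_0_compat; try nra;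
      apply Rmult_le_pos; nra. }
    rewrite H3. apply sqrt_ge_lin.
    - apply Rmult_le_pos; apply Rplus_le_le_0_compat; try nra; apply Rmult_le_pos; nra.
    - assert (0 <= e * e * (e * S) * ((v - w) * (v - w))).
      { pose proof (Rle_0_sqr (v - w)) as Hsq. unfold Rsqr in Hsq.
        apply Rmult_le_pos; [apply Rmult_le_pos; apply Rmult_le_pos; lra|exact Hsq]. }
      assert (Eq : (e * e + e * S * (v * v)) * (e * e + e * S * (w * w)) -
         (e * e + e * S * (v * w)) * (e * e + e * S * (v * w)) = e * e * (e * S) * ((v - w) * (v - w))) by ring.
      lra. }
  assert (E : e * S * v / Qv * (w - v) = (e * S * v * w - e * S * v * v) / Qv) by (field; lra).
  rewrite E. apply Rmult_le_reg_r with Qv; [lra|].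
  replace ((e * S * v * w - e * S * v * v) / Qv * Qv) with (e * S * v * w - e * S * v * v)
    by (field; lra).
  nra.
Qed.

Lemma psi_range e S v : 0 < e -> 0 <= S -> 0 <= v <= 1 ->
  0 <= psi e S v <= sqrt (e * e + e * S).
Proof.
  intros He HS Hv. pose proof (QQ_ge e S v He HS). unfold psi. split; [lra|].
  assert (QQ e S v <= sqrt (e * e + e * S)).
  { unfold QQ. apply sqrt_le_1_alt. assert (e * S * (v * v) <= e * S * 1).
    { apply Rmult_le_compat_l; [nra|]. nra. } lra. }
  lra.
Qed.

Lemma dpsi_range e S v : 0 < e -> 0 <= S -> 0 <= v <= 1 -> 0 <= dpsi e S v <= S.
Proof.
  intros He HS Hv. pose proof (QQ_ge e S v He HS). unfold dpsi. split.
  - apply Rdiv_le_0_compat; [|lra]. apply Rmult_le_pos; nra.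
  - apply Rmult_le_reg_r with (QQ e S v); [lra|].
    replace (e * S * v / QQ e S v * QQ e S v) with (e * S * v) by (field; lra).
    assert (e * S * v <= e * S * 1) by (apply Rmult_le_compat_l; [apply Rmult_le_pos|]; lra).
    assert (S * e <= S * QQ e S v) by (apply Rmult_le_compat_l; lra). lra.
Qed.

Lemma gg_psi e S v : 0 < e -> 0 <= S -> 0 <= v ->
  gg e (psi e S v) = sqrt (e * S) * v / QQ e S v.
Proof.
  intros He HS Hv. unfold gg, psi. pose proof (QQ_sq e S v He HS). pose proof (QQ_ge e S v He HS).
  replace (e + (QQ e S v - e)) with (QQ e S v) by ring. f_equal.
  replace ((QQ e S v - e) * (2 * e + (QQ e S v - e))) with ((sqrt (e * S) * v) * (sqrt (e * S) * v)).
  - apply sqrt_square. apply Rmult_le_pos; auto. apply sqrt_pos.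
  - replace (sqrt (e * S) * v * (sqrt (e * S) * v)) with (sqrt (e * S) * sqrt (e * S) * (v * v)) by ring.
    rewrite sqrt_sqrt by nra. nra.
Qed.

Lemma barrier_ineq e S v A fv Mf : 0 < e -> 0 <= S -> 0 <= v <= 1 -> 0 <= fv -> fv <= S * v ->
  fv <= Mf -> A >= Mf + 2 * sqrt (e * S) ->
  dpsi e S v <= A * gg e (psi e S v) - fv.
Proof.
  intros He HS Hv Hf1 Hf2 Hf3 HA. rewrite gg_psi by lra. unfold dpsi.
  pose proof (QQ_sq e S v He HS). pose proof (QQ_ge e S v He HS).
  set (mu := sqrt (e * S)) in *. assert (Hmu : 0 <= mu) by apply sqrt_pos.
  assert (Hmu2 : mu * mu = e * S) by (apply sqrt_sqrt; nra).
  set (Q := QQ e S v) in *.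
  assert (HQ : Q <= e + mu * v).
  { rewrite <- (sqrt_square (e + mu * v)) by nra. unfold Q, QQ. apply sqrt_le_1_alt.
    assert (mu * mu * (v * v) = e * S * (v * v)) by (rewrite Hmu2; ring).
    assert (0 <= e * mu * v) by (apply Rmult_le_pos; [apply Rmult_le_pos|]; lra). lra. }
  apply Rmult_le_reg_r with Q; [lra|].
  replace ((A * (mu * v / Q) - fv) * Q) with (A * mu * v - fv * Q) by (field; lra).
  replace (e * S * v / Q * Q) with (e * S * v) by (field; lra).
  assert (fv * Q <= fv * (e + mu * v)) by (apply Rmult_le_compat_l; auto).
  assert (fv * e <= S * v * e) by (apply Rmult_le_compat_r; lra).
  assert (fv * (mu * v) <= Mf * (mu * v)) by (apply Rmult_le_compat_r; [apply Rmult_le_pos|]; lra).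
  assert (mu * v * (A - Mf - 2 * mu) >= 0) by (apply Rle_ge, Rmult_le_pos; [apply Rmult_le_pos|]; lra).
  assert (S * v * e = mu * mu * v) by (rewrite Hmu2; ring).
  lra.
Qed.

Theorem lemma2 (f h h1 h2 : R -> R) (eps c Mf mh S : R) :
  hypF f -> hypH h h1 h2 -> eps > 0 ->
  (exists v, I01 v /\ f v = Mf) -> (forall v, I01 v -> f v <= Mf) ->
  (exists v, I01 v /\ h1 v = mh) -> (forall v, I01 v -> mh <= h1 v) ->
  is_lub (fun r => exists v, 0 < v <= 1 /\ r = f v / v) S ->
  c >= Mf - mh + 2 * sqrt (eps * S) ->
  exists y : R -> R, solves f h1 eps c y.
Proof.
  intros HF HH He _ HfM _ Hmh Hlub Hc.
  destruct HF as [Hfc [Hf0 [Hf1 [Hfpos _]]]].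
  destruct HH as [_ [Hh1d _]].
  assert (Hfnn : forall v, I01 v -> 0 <= f v).
  { intros v [Hv Hv']. destruct (Req_dec v 0) as [->|]; [rewrite Hf0; lra|].
    destruct (Req_dec v 1) as [->|]; [rewrite Hf1; lra|]. left. apply Hfpos. lra. }
  assert (HMf : 0 <= Mf).
  { pose proof (HfM 0 ltac:(unfold I01; lra)). rewrite Hf0 in H. exact H. }
  destruct Hlub as [Hub _].
  assert (HS : 0 <= S).
  { pose proof (Hub (f 1 / 1) ltac:(exists 1; split; [lra|reflexivity])).
    rewrite Hf1 in H. unfold Rdiv in H. rewrite Rmult_0_l in H. exact H. }
  assert (HfS : forall v, I01 v -> f v <= S * v).
  { intros v [Hv Hv']. destruct (Req_dec v 0) as [->|Hne]; [rewrite Hf0; lra|].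
    pose proof (Hub (f v / v) ltac:(exists v; split; [lra|reflexivity])).
    apply Rmult_le_reg_r with (/ v); [apply Rinv_0_lt_compat; lra|].
    replace (S * v * / v) with S by (field; lra). exact H. }
  pose proof (RC_of_cont f Hfc) as RCf.
  pose proof (RC_of_deriv h1 h2 Hh1d) as RCh.
  destruct (continuity_ab_maj (fun z => h1 (clamp 0 1 z)) 0 1 ltac:(lra)
    (cont_clamp 0 1 h1 ltac:(lra) RCh)) as [Mx [HMx _]].
  set (mu := sqrt (eps * S)) in *.
  assert (Hmu : 0 <= mu) by apply sqrt_pos.
  set (B := c + h1 (clamp 0 1 Mx)).
  set (K := sqrt (eps * eps + eps * S)).
  assert (HK : 0 <= K) by apply sqrt_pos.
  set (a := fun t => f (clamp 0 1 (1 - t))).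
  set (b := fun t => c + h1 (clamp 0 1 (1 - t))).
  set (G := fun Y => gg eps (clamp 0 K Y)).
  set (Phi := fun t Y => a t - b t * G Y).
  assert (Hb : forall t, 0 <= b t <= B).
  { intros t. unfold b, B. pose proof (clamp_range 0 1 (1 - t) ltac:(lra)) as Hr.
    pose proof (Hmh _ Hr). pose proof (HMx _ Hr). simpl in H0.
    rewrite (clamp_id 0 1 (clamp 0 1 (1 - t)) Hr) in H0. lra. }
  assert (Ha : forall t, 0 <= a t <= Mf).
  { intros t. unfold a. pose proof (clamp_range 0 1 (1 - t) ltac:(lra)) as Hr.
    split; [apply Hfnn; exact Hr| apply HfM; exact Hr]. }
  assert (HG : forall Y, 0 <= G Y <= 1).
  { intros Y. unfold G. apply gg_range; auto. apply clamp_range; auto. }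
  assert (HGm : forall Y1 Y2, Y1 <= Y2 -> G Y1 <= G Y2).
  { intros Y1 Y2 H. unfold G. apply gg_mono; auto. split.
    - apply clamp_range; auto.
    - apply clamp_mono; auto. }
  assert (HG0 : G 0 = 0).
  { unfold G. rewrite clamp_id by lra. apply gg0; auto. }
  set (M := Mf + B + 1).
  assert (HM : 0 < M) by (pose proof (Hb 0); unfold M; lra).
  assert (HB : Bnd Phi M).
  { intros t Y. unfold Phi. pose proof (Ha t). pose proof (Hb t). pose proof (HG Y).
    assert (0 <= b t * G Y <= B) by (split; [apply Rmult_le_pos; lra| nra]).
    apply Rabs_le_between. unfold M. lra. }
  assert (HU : UC2 Phi).
  { apply (UC2_Phi a b G B).
    - exact (UC_flip _ (UC_clamp 0 1 f ltac:(lra) RCf)).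
    - exact (UC_plus_c c _ (UC_flip _ (UC_clamp 0 1 h1 ltac:(lra) RCh))).
    - exact (UC_clamp 0 K (gg eps) HK (contpt_RC 0 K (gg eps) (fun x Hx => gg_cont eps x He (proj1 Hx)))).
    - pose proof (Hb 0); lra.
    - intros t. pose proof (Hb t). rewrite Rabs_pos_eq; lra.
    - intros Y. pose proof (HG Y). rewrite Rabs_pos_eq; lra. }
  assert (Hmo : Mono Phi).
  { intros t Y1 Y2 H. unfold Phi. pose proof (Hb t). pose proof (HGm Y1 Y2 H).
    assert (b t * G Y1 <= b t * G Y2) by (apply Rmult_le_compat_l; lra). lra. }
  pose proof (Yl_lip Phi M HM HB HU Hmo) as HYL.
  pose proof (Yl_est Phi M HM HB HU Hmo) as HYE.
  pose proof (Yl0 Phi) as HY0.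
  set (Y := Yl Phi) in *.
  set (L := M + S).
  assert (HL : 0 < L) by (unfold L; lra).
  assert (HYL' : Lip Y L) by (apply Lip_mono with M; auto; unfold L; lra).
  assert (HPhi0 : forall s, Phi s 0 = a s).
  { intros s. unfold Phi. rewrite HG0. ring. }
  assert (HYpos : forall t, 0 <= t <= 1 -> 0 <= Y t).
  { intros t Ht. cut (0 - Y t <= 0); [lra|].
    apply approx_le. intros th Hth.
    destruct (HYE th Hth) as [d [Hd Hdd]].
    pose proof (compare Phi (fun _ => 0) Y L 0 th d HL Hd ltac:(lra) ltac:(lra) Hmo) as Cm.
    assert (X : 0 - Y t <= (0 + th) * t).
    { apply Cm; auto.
      - intros s t' Hs Ht'. rewrite Rminus_diag, Rabs_R0. nra.
      - intros s t' Hs Ht' Hd'. rewrite HPhi0. pose proof (Ha s). nra.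
      - intros s t' Hs Ht' Hd'. specialize (Hdd s t' Hs Ht' Hd').
        apply Rabs_le_between in Hdd. lra.
      - lra. }
    nra. }
  set (Psi := fun t => psi eps S (1 - t)).
  assert (HPsiL : Lip Psi L).
  { intros s t Hst Ht. unfold Psi.
    pose proof (psi_convex eps S (1 - s) (1 - t) He HS).
    pose proof (psi_convex eps S (1 - t) (1 - s) He HS).
    pose proof (dpsi_range eps S (1 - s) He HS ltac:(lra)).
    pose proof (dpsi_range eps S (1 - t) He HS ltac:(lra)).
    assert (dpsi eps S (1 - s) * (t - s) <= S * (t - s)) by (apply Rmult_le_compat_r; lra).
    assert (0 <= dpsi eps S (1 - t) * (t - s)) by (apply Rmult_le_pos; lra).
    assert (S * (t - s) <= L * (t - s)) by (apply Rmult_le_compat_r; unfold L; lra).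
    apply Rabs_le_between. split; nra. }
  assert (HPsiS : forall s t, 0 <= s <= t -> t <= 1 -> Phi s (Psi s) * (t - s) - 0 * (t - s) <= Psi t - Psi s).
  { intros s t Hst Ht. unfold Psi, Phi, a, b, G.
    rewrite (clamp_id 0 1 (1 - s)) by lra.
    pose proof (psi_range eps S (1 - s) He HS ltac:(lra)) as Hpr.
    rewrite (clamp_id 0 K) by exact Hpr.
    assert (HI : I01 (1 - s)) by (unfold I01; lra).
    pose proof (Hmh _ HI).
    pose proof (barrier_ineq eps S (1 - s) (c + h1 (1 - s)) (f (1 - s)) Mf He HS ltac:(lra)
      (Hfnn _ HI) (HfS _ HI) (HfM _ HI) ltac:(unfold mu in *; lra)) as Hbi.
    pose proof (psi_convex eps S (1 - s) (1 - t) He HS) as Hcv.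
    replace (1 - t - (1 - s)) with (-(t - s)) in Hcv by ring.
    assert ((f (1 - s) - (c + h1 (1 - s)) * gg eps (psi eps S (1 - s))) * (t - s) <=
            (- dpsi eps S (1 - s)) * (t - s)) by (apply Rmult_le_compat_r; lra).
    lra. }
  assert (HYle : forall t, 0 <= t <= 1 -> Y t <= Psi t).
  { intros t Ht. cut (Y t - Psi t <= 0); [lra|].
    apply approx_le. intros th Hth.
    destruct (HYE th Hth) as [d [Hd Hdd]].
    pose proof (compare Phi Y Psi L th 0 d HL Hd ltac:(lra) ltac:(lra) Hmo) as Cm.
    assert (X : Y t - Psi t <= (th + 0) * t).
    { apply Cm; auto.
      - intros s t' Hs Ht' Hd'. specialize (Hdd s t' Hs Ht' Hd').
        apply Rabs_le_between in Hdd. lra.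
      - rewrite HY0. unfold Psi. pose proof (psi_range eps S (1 - 0) He HS ltac:(lra)). lra. }
    nra. }
  assert (HY1 : Y 1 = 0).
  { pose proof (HYle 1 ltac:(lra)). pose proof (HYpos 1 ltac:(lra)).
    unfold Psi, psi, QQ in H. replace (eps * eps + eps * S * ((1 - 1) * (1 - 1))) with (eps * eps) in H by ring.
    rewrite sqrt_square in H by lra. lra. }
  assert (HYK : forall t, 0 <= t <= 1 -> 0 <= Y t <= K).
  { intros t Ht. split; [auto|]. pose proof (HYle t Ht).
    pose proof (psi_range eps S (1 - t) He HS ltac:(lra)). unfold Psi in H. fold K in H0. lra. }
  assert (HYgt : forall t, 0 < t < 1 -> 0 < Y t).
  { intros t0 Ht0. destruct (Rlt_or_le 0 (Y t0)) as [|Hle]; auto. exfalso.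
    assert (HY00 : Y t0 = 0) by (pose proof (HYpos t0 ltac:(lra)); lra).
    assert (Ha0 : 0 < a t0).
    { unfold a. rewrite clamp_id by lra. apply Rlt_gt, Hfpos. lra. }
    set (ep := a t0 / 3).
    destruct (HYE ep ltac:(unfold ep; lra)) as [d1 [Hd1 H1]].
    destruct (HU ep ltac:(unfold ep; lra)) as [d2 [Hd2 H2]].
    set (r := Rmin (Rmin d1 (d2 / 2)) (Rmin (d2 / (2 * M)) (t0 / 2))).
    assert (Hr : 0 < r).
    { unfold r. repeat apply Rmin_glb_lt; try lra. apply Rdiv_lt_0_compat; lra. }
    assert (R1 : r <= d1) by (unfold r; eapply Rle_trans; [apply Rmin_l|apply Rmin_l]).
    assert (R2 : r <= d2 / 2) by (unfold r; eapply Rle_trans; [apply Rmin_l|apply Rmin_r]).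
    assert (R3 : r <= d2 / (2 * M)) by (unfold r; eapply Rle_trans; [apply Rmin_r|apply Rmin_l]).
    assert (R4 : r <= t0 / 2) by (unfold r; eapply Rle_trans; [apply Rmin_r|apply Rmin_r]).
    assert (R5 : M * r <= d2 / 2).
    { apply Rmult_le_compat_l with (r := M) in R3; [|lra].
      replace (M * (d2 / (2 * M))) with (d2 / 2) in R3 by (field; lra). exact R3. }
    specialize (H1 (t0 - r) t0 ltac:(lra) ltac:(lra) ltac:(lra)).
    replace (t0 - (t0 - r)) with r in H1 by ring.
    pose proof (HYL (t0 - r) t0 ltac:(lra) ltac:(lra)) as Lp.
    replace (t0 - (t0 - r)) with r in Lp by ring.
    assert (Hc2 := H2 (t0 - r) t0 (Y (t0 - r)) (Y t0)
      ltac:(replace (t0 - r - t0) with (-r) by ring; rewrite Rabs_Ropp, Rabs_pos_eq; lra)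
      ltac:(rewrite Rabs_minus_sym; lra)).
    rewrite HY00, HPhi0 in Hc2. rewrite HY00 in H1.
    apply Rabs_def2 in Hc2. apply Rabs_le_between in H1.
    pose proof (HYpos (t0 - r) ltac:(lra)).
    assert (2 * ep * r <= Phi (t0 - r) (Y (t0 - r)) * r) by (apply Rmult_le_compat_r; unfold ep in *; lra).
    assert (0 < ep * r) by (apply Rmult_lt_0_compat; unfold ep; lra).
    lra. }
  exists (fun v => Y (1 - v)).
  split; [|split; [|split]].
  - intros x Hx. unfold cont_on01_at. apply filterlim_locally. intros [e0 He0]. simpl.
    unfold within. exists (mkposreal (e0 / (M + 1)) ltac:(apply Rdiv_lt_0_compat; lra)).
    intros t Ht HIt. simpl in Ht. change (Rabs (t - x) < e0 / (M + 1)) in Ht.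
    change (Rabs (Y (1 - t) - Y (1 - x)) < e0).
    destruct Hx as [Hx1 Hx2]. destruct HIt as [Ht1 Ht2].
    pose proof (Lip_abs Y M HYL (1 - x) (1 - t) ltac:(lra) ltac:(lra)) as Lp.
    replace (1 - t - (1 - x)) with (-(t - x)) in Lp by ring. rewrite Rabs_Ropp in Lp.
    assert (M * Rabs (t - x) <= M * (e0 / (M + 1))) by (apply Rmult_le_compat_l; lra).
    assert (M * (e0 / (M + 1)) < e0).
    { apply Rmult_lt_reg_r with (M + 1); [lra|].
      replace (M * (e0 / (M + 1)) * (M + 1)) with (M * e0) by (field; lra). nra. }
    lra.
  - simpl. rewrite Rminus_0_r. exact HY1.
  - simpl. rewrite Rminus_diag. exact HY0.
  - intros v Hv. split; [apply Rlt_gt, HYgt; lra|].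
    pose proof (deriv_est Phi Y M (1 - v) HM HU HYL HYE ltac:(lra)) as Hd.
    apply is_derive_Reals in Hd.
    assert (Hg : is_derive (fun v => 1 - v) v (-1)) by (auto_derive; try easy; try ring).
    pose proof (is_derive_comp Y (fun v => 1 - v) v _ _ Hd Hg) as Hc'.
    eapply is_derive_ext; [intros t; reflexivity|].
    replace ((c + h1 v) * sqrt (Y (1 - v) * (2 * eps + Y (1 - v))) / (eps + Y (1 - v)) - f v)
      with (scal (-1) (Phi (1 - v) (Y (1 - v)))); [exact Hc'|].
    change (scal (-1) (Phi (1 - v) (Y (1 - v)))) with (-1 * Phi (1 - v) (Y (1 - v))).
    unfold Phi, a, b, G. replace (1 - (1 - v)) with v by ring.
    rewrite (clamp_id 0 1 v) by lra.
    rewrite (clamp_id 0 K (Y (1 - v))) by (apply HYK; lra).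
    unfold gg. match goal with |- ?A = ?B => change (@eq R A B) end. unfold Rdiv. ring.
Qed.
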